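(* Let $\alpha\in(0,1]$ and let $\{Z_i\}$ be an i.i.d. sequence of $\mathbb{R}^d$-valued random variables on a sublinear expectation space $(\Omega,\mathcal{H},\hat{\mathbb{E}})$ with $S_n=\sum_{i=1}^nZ_i$, and assume there is $0<\delta<\alpha$ with $M_\delta:=\sup_n\hat{\mathbb{E}}[|n^{-1/\alpha}S_n|^\delta]<\infty$. For $\phi\in C_{b,Lip}(\mathbb{R}^d)$ let $\hat{\mathbb{F}}[\phi]:=\sup_n\hat{\mathbb{E}}[\phi(S_n/\sqrt[\alpha]{n})]$. Then $\hat{\mathbb{F}}$ is a tight sublinear expectation on $(\mathbb{R}^d,C_{b,Lip}(\mathbb{R}^d))$.
   Context: Sublinear expectation: a functional that is monotone, constant preserving, sub-additive and positively homogeneous; random variables need only satisfy $\varphi(X)\in\mathcal{H}$ for bounded Lipschitz $\varphi$. I.i.d. means each $Z_{i+1}$ has the same distribution as $Z_i$ and is independent from $(Z_1,\dots,Z_i)$ in the sublinear sense ($\hat{\mathbb{E}}[\varphi(X,Y)]=\hat{\mathbb{E}}[\hat{\mathbb{E}}[\varphi(x,Y)]_{x=X}]$). A sublinear expectation $\mathbb{E}$ on $(\mathbb{R}^n,C_{b,Lip}(\mathbb{R}^n))$ is tight if for each $\varepsilon>0$ there exist $N>0$ and $\varphi\in C_{b,Lip}(\mathbb{R}^n)$ with $\mathbb{1}_{\{|x|\ge N\}}\le\varphi$ and $\mathbb{E}[\varphi]<\varepsilon$. *)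

(* Defs.v *)
From HB Require Import structures.
From mathcomp Require Import all_boot all_order all_algebra.
From mathcomp Require Import all_classical all_reals all_analysis.
Set Implicit Arguments. Unset Strict Implicit. Unset Printing Implicit Defensive.
Import Order.TTheory GRing.Theory Num.Theory.
Import numFieldNormedType.Exports.
Local Open Scope classical_set_scope.
Local Open Scope ring_scope.

Definition cblip (R : realType) (V : normedModType R) (phi : V -> R) : Prop :=
  (exists C : R, forall x, `|phi x| <= C) /\
  (exists L : R, forall x y, `|phi x - phi y| <= L * `|x - y|).

Definition sublinear_expectation (R : realType) (T : Type)
  (H : set (T -> R)) (E : (T -> R) -> R) : Prop :=
  (forall c : R, H (fun _ => c)) /\
      (forall X Y, H X -> H Y -> H (X \+ Y)) /\
      (forall (a : R) X, H X -> H (fun w => a * X w)) /\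
      (forall X Y, H X -> H Y -> (forall w, X w <= Y w) -> E X <= E Y) /\
      (forall c : R, E (fun _ => c) = c) /\
      (forall X Y, H X -> H Y -> E (X \+ Y) <= E X + E Y) /\
      (forall (l : R) X, H X -> 0 <= l -> E (fun w => l * X w) = l * E X).

Definition random_variable (R : realType) (Omega : Type) (H : set (Omega -> R))
  (V : normedModType R) (X : Omega -> V) : Prop :=
  forall phi : V -> R, cblip phi -> H (phi \o X).

(* The random matrix whose rows are Z_1, ..., Z_i (0-indexed: Z 0, ..., Z i.-1),
   i.e. the random vector (Z_1, ..., Z_i) in R^{d i}. *)
Definition first_rows (R : realType) (Omega : Type) (d : nat)
  (Z : nat -> Omega -> 'rV[R]_d) (i : nat) (w : Omega) : 'M[R]_(i, d) :=
  \matrix_(k < i, j < d) Z k w 0 j.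

(* {Z_i} is an i.i.d. sequence (0-indexed: Z 0 = Z_1, Z 1 = Z_2, ...) of
   R^d-valued random variables on (Omega, H, E). *)
Definition iid_seq (R : realType) (Omega : Type) (H : set (Omega -> R))
  (E : (Omega -> R) -> R) (d : nat) (Z : nat -> Omega -> 'rV[R]_d) : Prop :=
  (forall i, random_variable H (first_rows Z i)) /\
  (forall k, random_variable H (Z k)) /\
  (forall k (phi : 'rV[R]_d -> R), cblip phi ->
      E (phi \o Z k.+1) = E (phi \o Z k)) /\
  (* Z_{i+1} is independent from (Z_1, ..., Z_i) *)
  (forall i (phi : 'M[R]_(i, d) * 'rV[R]_d -> R), cblip phi ->
      E (fun w => phi (first_rows Z i w, Z i w)) =
      E (fun w => E (fun w' => phi (first_rows Z i w, Z i w')))).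

Definition partial_sum (R : realType) (Omega : Type) (d : nat)
  (Z : nat -> Omega -> 'rV[R]_d) (n : nat) (w : Omega) : 'rV[R]_d :=
  \sum_(k < n) Z k w.

Definition normalized_sum (R : realType) (Omega : Type) (d : nat)
  (Z : nat -> Omega -> 'rV[R]_d) (alpha : R) (n : nat) (w : Omega) : 'rV[R]_d :=
  (n%:R `^ (- alpha^-1)) *: partial_sum Z n w.

Definition Fhat_set (R : realType) (Omega : Type) (E : (Omega -> R) -> R) (d : nat)
  (Z : nat -> Omega -> 'rV[R]_d) (alpha : R) (phi : 'rV[R]_d -> R) : set R :=
  [set E (phi \o normalized_sum Z alpha n) | n in [set n : nat | (0 < n)%N]].

Definition Fhat (R : realType) (Omega : Type) (E : (Omega -> R) -> R) (d : nat)
  (Z : nat -> Omega -> 'rV[R]_d) (alpha : R) (phi : 'rV[R]_d -> R) : R :=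
  sup (Fhat_set E Z alpha phi).

Definition tight (R : realType) (d : nat) (F : ('rV[R]_d -> R) -> R) : Prop :=
  forall eps : R, 0 < eps -> exists N : R, 0 < N /\
    exists phi : 'rV[R]_d -> R, cblip phi /\
      (forall x, (if N <= `|x| then 1 else 0) <= phi x) /\ F phi < eps.

(* Main.v *)
Require Import Defs.
From HB Require Import structures.
From mathcomp Require Import all_boot all_order all_algebra.
From mathcomp Require Import all_classical all_reals all_analysis.
From mathcomp Require Import ring lra.
Import Order.TTheory GRing.Theory Num.Theory.
Import numFieldNormedType.Exports.
Local Open Scope classical_set_scope.
Local Open Scope ring_scope.

Section H.
Variable R : realType.

Lemma clamp_lip (a b : R) :
  `|Num.min 1 (Num.max 0 a) - Num.min 1 (Num.max 0 b)| <= `|a - b|.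
Proof.
rewrite /Order.min /Order.max.
case: (ltP 0 a) => ha; case: (ltP 0 b) => hb /=;
  case: (ltP 1 a) => ha1; case: (ltP 1 b) => hb1 /=; rewrite ?ltr10 ?ler_norml /=;
  have h1 := ler_norm (a - b); have h2 : b - a <= `|a - b| by rewrite distrC ler_norm.
all: apply/andP; split; lra.
Qed.

Lemma clamp_bnd (a : R) : 0 <= Num.min 1 (Num.max 0 a) <= 1.
Proof. rewrite /Order.min /Order.max.
case: (ltP 0 a) => ha /=; case: (ltP 1 a) => ha1 /=; rewrite ?ltr10 /=; apply/andP; lra. Qed.

Lemma row_norm_le m n (A : 'M[R]_(m, n)) k : `|row k A| <= `|A|.
Proof.
rewrite [leLHS]/Num.norm [leRHS]/Num.norm /= !mx_normrE.
apply/bigmax_leP; split => [|[i j] _]; first by apply/bigmax_geP; left.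
apply/bigmax_geP; right; exists (k, j) => //=; by rewrite mxE.
Qed.

Lemma cblip_comp (V W : normedModType R) (f : V -> W) (K : R)
  (hf : forall x y, `|f x - f y| <= K * `|x - y|) (phi : W -> R) :
  cblip phi -> cblip (phi \o f).
Proof.
move=> [[C hC] [L hL]]; split; first by exists C => x; exact: hC.
exists (Num.max L 0 * K) => x y /=.
apply: (le_trans (hL _ _)).
have hL0 : 0 <= Num.max L 0 by rewrite le_max lexx orbT.
apply: (le_trans (y := Num.max L 0 * `|f x - f y|)).
  by apply: ler_wpM2r => //; rewrite le_max lexx.
by rewrite -mulrA; apply: ler_wpM2l.
Qed.

End H.
Section H2.
Variable R : realType.

Definition psi {n d} (c : R) (M : 'M[R]_(n, d)) : 'rV[R]_d := c *: \sum_(k < n) row k M.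

Lemma psi_lip n d (c : R) (M M' : 'M[R]_(n, d)) :
  `|psi c M - psi c M'| <= (`|c| * n%:R) * `|M - M'|.
Proof.
rewrite /psi -scalerBr -sumrB normrZ -mulrA ler_wpM2l //.
apply: (le_trans (ler_norm_sum _ _ _)).
apply: (le_trans (y := \sum_(k < n) `|M - M'|)).
  apply: ler_sum => k _; rewrite -linearB /=; exact: row_norm_le.
by rewrite sumr_const card_ord mulr_natl.
Qed.

Lemma ns_factor (Omega : Type) d (Z : nat -> Omega -> 'rV[R]_d) alpha n w :
  normalized_sum Z alpha n w = psi (n%:R `^ (- alpha^-1)) (first_rows Z n w).
Proof.
rewrite /normalized_sum /psi /partial_sum; congr (_ *: _).
apply: eq_bigr => k _; apply/rowP => j; by rewrite !mxE.
Qed.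

End H2.
Theorem lemma4p2 (R : realType) (Omega : Type) (H : set (Omega -> R))
  (E : (Omega -> R) -> R) (d : nat) (Z : nat -> Omega -> 'rV[R]_d)
  (alpha delta : R) :
  sublinear_expectation H E ->
  iid_seq H E Z ->
  0 < alpha -> alpha <= 1 ->
  0 < delta -> delta < alpha ->
  (exists M : R, forall (n : nat) (phi : 'rV[R]_d -> R), (0 < n)%N ->
      cblip phi -> (forall x, phi x <= `|x| `^ delta) ->
      E (phi \o normalized_sum Z alpha n) <= M) ->
  (forall phi : 'rV[R]_d -> R, cblip phi -> has_sup (Fhat_set E Z alpha phi)) /\
  sublinear_expectation (@cblip R _) (Fhat E Z alpha) /\
  tight (Fhat E Z alpha).
Proof.
move=> [Hc [HD [HZ [Emono [Econst [Esub Ehom]]]]]] [Hrows _] a0 a1 d0 da [M HM].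
set S := normalized_sum Z alpha.
have HS : forall n phi, cblip phi -> H (phi \o S n).
  move=> n phi cphi.
  have -> : phi \o S n = (phi \o @psi R n d (n%:R `^ (- alpha^-1))) \o first_rows Z n.
    by apply: funext => w /=; rewrite /S ns_factor.
  apply: Hrows; exact: (@cblip_comp R _ _ _ _ (@psi_lip R n d _) phi cphi).
have cb_const : forall c : R, cblip (fun _ : 'rV[R]_d => c).
  move=> c; split; first by exists `|c|.
  by exists 0 => x y; rewrite subrr normr0 mul0r.
have cb_add : forall X Y : 'rV[R]_d -> R, cblip X -> cblip Y -> cblip (X \+ Y).
  move=> X Y [[C1 h1] [L1 l1]] [[C2 h2] [L2 l2]]; split.
    by exists (C1 + C2) => x /=; apply: le_trans (ler_normD _ _) _; apply: lerD.
  exists (L1 + L2) => x y /=; rewrite mulrDl.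
  rewrite (_ : X x + Y x - (X y + Y y) = (X x - X y) + (Y x - Y y)); last by ring.
  by apply: le_trans (ler_normD _ _) _; apply: lerD.
have cb_scale : forall (a : R) (X : 'rV[R]_d -> R), cblip X -> cblip (fun w => a * X w).
  move=> a X [[C1 h1] [L1 l1]]; split.
    by exists (`|a| * C1) => x; rewrite normrM ler_wpM2l.
  exists (`|a| * L1) => x y; rewrite -mulrBr normrM -mulrA ler_wpM2l //.
have Ebnd : forall n phi C, cblip phi -> (forall x, phi x <= C) -> E (phi \o S n) <= C.
  move=> n phi C cphi hC; rewrite -[leRHS]Econst; apply: Emono; [exact: HS | exact: Hc | move=> w; exact: hC].
have ne : forall phi0, Fhat_set E Z alpha phi0 !=set0.
  by move=> phi0; exists (E (phi0 \o S 1%N)); exists 1%N.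
have hsup : forall phi : 'rV[R]_d -> R, cblip phi -> has_sup (Fhat_set E Z alpha phi).
  move=> phi cphi; split => //.
  have [[C hC] _] := cphi.
  exists C => _ [n _ <-]; apply: Ebnd => // x.
  exact: le_trans (ler_norm _) (hC x).
have le_F : forall phi n, cblip phi -> (0 < n)%N -> E (phi \o S n) <= Fhat E Z alpha phi.
  move=> phi n cphi n0; apply: ub_le_sup; first by case: (hsup _ cphi).
  by exists n.
split => //; split.
  split => //; split => //; split => //; split.
    move=> X Y cX cY hXY; apply: ge_sup => // _ [n n0 <-].
    apply: le_trans (le_F _ _ cY n0); apply: Emono; try exact: HS.
    by move=> w; apply: hXY.
  split.
    move=> c; rewrite /Fhat.
    have -> : Fhat_set E Z alpha (fun _ => c) = [set c].
      apply/seteqP; split => x.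
        by move=> [n _ <-]; rewrite /= Econst.
      by move=> ->; exists 1%N => //; rewrite /= Econst.
    exact: sup1.
  split.
    move=> X Y cX cY; apply: ge_sup => // _ [n n0 <-].
    apply: le_trans (Esub _ _ (HS n _ cX) (HS n _ cY)) _.
    by apply: lerD; apply: le_F.
  move=> l X cX l0.
  apply/eqP; rewrite eq_le; apply/andP; split.
    apply: ge_sup => // _ [n n0 <-].
    rewrite /= (Ehom _ _ (HS n X cX) l0); apply: ler_wpM2l => //; exact: le_F.
  have [->|lp] := eqVneq l 0.
    rewrite mul0r; apply: le_trans (le_F _ 1%N (cb_scale 0 X cX) isT).
    by rewrite /= (Ehom _ _ (HS 1%N X cX) (lexx 0)) mul0r.
  have l0' : 0 < l by rewrite lt_def lp l0.
  rewrite mulrC -ler_pdivlMr //.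
  apply: ge_sup => // _ [n n0 <-].
  rewrite ler_pdivlMr // mulrC -(Ehom _ _ (HS n X cX) l0).
  exact: (le_F _ n (cb_scale l X cX) n0).
move=> eps e0.
have M0 : 0 <= M.
  have := HM 1%N (fun _ => 0) isT (cb_const 0) (fun x => powR_ge0 _ _).
  by rewrite /= Econst.
set B := M / eps + 1.
have B0 : 0 < B by rewrite /B; have := divr_ge0 M0 (ltW e0); lra.
set K := B `^ delta^-1.
have K0 : 0 < K by apply: powR_gt0.
have KB : K `^ delta = B.
  by rewrite /K -powRrM mulVf ?gt_eqF // powRr1 // ltW.
set phi := fun x : 'rV[R]_d => Num.min 1 (Num.max 0 (`|x| - K)).
have cphi : cblip phi.
  split; exists 1 => x.
    have /andP[h0 h1] := @clamp_bnd R (`|x| - K); rewrite ger0_norm //.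
  move=> y; apply: le_trans (@clamp_lip R _ _) _; rewrite mul1r.
  have -> : `|x| - K - (`|y| - K) = `|x| - `|y| by ring.
  exact: ler_dist_dist.
exists (K + 1); split; first lra.
exists phi; split => //; split.
  move=> x; case: ifPn => hx.
    rewrite /phi /Order.min /Order.max; case: (ltP 0 _) => h1 /=; case: (ltP 1 _) => h2 /=; lra.
  by have /andP[h0 h1] := @clamp_bnd R (`|x| - K).
apply: (le_lt_trans (y := M / B)).
  apply: ge_sup => // _ [n n0 <-].
  have hle : forall x, K `^ delta * phi x <= `|x| `^ delta.
    move=> x; case: (leP `|x| K) => hxK.
      rewrite /phi (_ : Num.max 0 (`|x| - K) = 0); last by rewrite max_l //; lra.
      by rewrite min_r // mulr0 powR_ge0.
    have /andP[h0 h1] := @clamp_bnd R (`|x| - K).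
    apply: (le_trans (y := K `^ delta * 1)); first by rewrite ler_wpM2l // powR_ge0.
    rewrite mulr1; apply: ge0_ler_powR; rewrite ?nnegrE ?ltW //; exact: lt_trans hxK.
  have : E (fun w => K `^ delta * (phi \o S n) w) <= M.
    exact: (HM n _ n0 (cb_scale _ _ cphi) hle).
  rewrite (Ehom _ _ (HS n phi cphi) (powR_ge0 _ _)) KB => h.
  by rewrite ler_pdivlMr // mulrC.
rewrite ltr_pdivrMr // /B mulrDr mulr1 mulrCA mulfV ?gt_eqF // mulr1; lra.
Qed.
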